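(* Let $A$ be an open interval with $0\notin A$, let $n\ge 1$ be an integer, and let $f:A\to(0,\infty)$ be $n$ times differentiable on $A$. Then for every $x\in A$, $$f^{*(n)}(x)=\left(\prod_{j=1}^{n}\bigl(f^{\pi(j)}(x)\bigr)^{(-1)^{n-j}s(n,j)}\right)^{\frac{1}{x^{n}}},$$ where $s(n,j)$ denotes the unsigned Stirling numbers of the first kind.
   Context: For a positive differentiable function $g$, the geometric multiplicative derivative is $g^{*}(x)=\lim_{h\to0}\bigl(g(x+h)/g(x)\bigr)^{1/h}=\exp\{g'(x)/g(x)\}$, and the Bigeometric derivative is $g^{\pi}(x)=\lim_{h\to0}\bigl(g((1+h)x)/g(x)\bigr)^{1/h}=\exp\{x\,g'(x)/g(x)\}$. Higher-order derivatives are defined by iteration: $f^{*(0)}=f$, $f^{*(k+1)}=(f^{*(k)})^{*}$, and $f^{\pi(0)}=f$, $f^{\pi(k+1)}=(f^{\pi(k)})^{\pi}$. The unsigned Stirling numbers of the first kind $s(n,j)$ satisfy $s(0,0)=1$, $s(n,0)=0$ for $n\ge1$, and $s(n+1,j)=n\,s(n,j)+s(n,j-1)$. *)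

(* Defs.v *)
From Stdlib Require Import Reals.
From Coquelicot Require Import Coquelicot.
Open Scope R_scope.

Definition mstar (g : R -> R) : R -> R := fun x => exp (Derive g x / g x).

Definition mpi (g : R -> R) : R -> R := fun x => exp (x * Derive g x / g x).

Fixpoint iter_deriv (op : (R -> R) -> (R -> R)) (k : nat) (g : R -> R) : R -> R :=
  match k with
  | O => g
  | S k' => op (iter_deriv op k' g)
  end.

Fixpoint stirling1 (n j : nat) : nat :=
  match n, j with
  | O, O => 1%nat
  | O, S _ => 0%nat
  | S _, O => 0%nat
  | S n', S j' => (n' * stirling1 n' (S j') + stirling1 n' j')%nat
  end.

Fixpoint prodR (n : nat) (F : nat -> R) : R :=
  match n with
  | O => 1
  | S k => prodR k F * F (S k)
  end.

(* Main.v *)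
Require Import Defs.
From Stdlib Require Import Reals.
From Coquelicot Require Import Coquelicot.
Open Scope R_scope.
From Stdlib Require Import Lra Lia.
Open Scope R_scope.

Fixpoint Cn (P : R -> Prop) (m : nat) (g : R -> R) : Prop :=
  match m with
  | O => True
  | S k => (forall x, P x -> ex_derive g x) /\ Cn P k (Derive g)
  end.

Lemma Cn_ext m : forall P g h, open P -> (forall x, P x -> g x = h x) -> Cn P m g -> Cn P m h.
Proof.
induction m as [|m IH]; simpl; intros P g h HP E C; auto.
destruct C as [C1 C2]; split.
- intros x Px. apply (ex_derive_ext_loc g); auto.
  apply (filter_imp P); auto.
- apply (IH P (Derive g)); auto.
  intros x Px. apply Derive_ext_loc. apply (filter_imp P); auto.
Qed.

Lemma Cn_weak m : forall P g, Cn P (S m) g -> Cn P m g.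
Proof.
induction m as [|m IH]; simpl; intros P g C; auto.
destruct C as [C1 [C2 C3]]; split; auto.
apply IH. simpl; auto.
Qed.

Lemma Cn_const m : forall P c, open P -> Cn P m (fun _ => c).
Proof.
induction m as [|m IH]; simpl; intros P c HP; auto.
split. intros; apply ex_derive_const.
apply (Cn_ext m P (fun _ => 0)); auto. intros; rewrite Derive_const; auto.
Qed.

Lemma Cn_id m : forall P, open P -> Cn P m (fun x => x).
Proof.
destruct m as [|m]; simpl; intros P HP; auto.
split. intros; apply ex_derive_id.
apply (Cn_ext m P (fun _ => 1)); auto.
intros; rewrite Derive_id; auto. apply Cn_const; auto.
Qed.

Lemma Cn_plus m : forall P g h, open P -> Cn P m g -> Cn P m h -> Cn P m (fun x => g x + h x).
Proof.
induction m as [|m IH]; simpl; intros P g h HP Cg Ch; auto.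
destruct Cg as [G1 G2]; destruct Ch as [H1 H2]; split.
- intros x Px; apply (ex_derive_plus g h); auto.
- apply (Cn_ext m P (fun x => Derive g x + Derive h x)); auto.
  intros; rewrite Derive_plus; auto.
Qed.

Lemma Cn_mult m : forall P g h, open P -> Cn P m g -> Cn P m h -> Cn P m (fun x => g x * h x).
Proof.
induction m as [|m IH]; intros P g h HP Cg Ch; simpl; auto.
assert (Cg' := Cn_weak _ _ _ Cg). assert (Ch' := Cn_weak _ _ _ Ch).
destruct Cg as [G1 G2]; destruct Ch as [H1 H2]; split.
- intros; apply ex_derive_mult; auto.
- apply (Cn_ext m P (fun x => Derive g x * h x + g x * Derive h x)); auto.
  intros; rewrite Derive_mult; auto.
  apply Cn_plus; auto.
Qed.

Lemma Cn_inv m : forall P g, open P -> (forall x, P x -> g x <> 0) -> Cn P m g -> Cn P m (fun x => / g x).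
Proof.
induction m as [|m IH]; intros P g HP Hn Cg; simpl; auto.
assert (Cg' := Cn_weak _ _ _ Cg).
destruct Cg as [G1 G2]; split.
- intros; apply ex_derive_inv; auto.
- apply (Cn_ext m P (fun x => (-1) * Derive g x * ((/ g x) * (/ g x)))); auto.
  intros; rewrite Derive_inv; auto. field. auto.
  apply Cn_mult; auto. apply Cn_mult; auto. apply Cn_const; auto.
  apply Cn_mult; auto.
Qed.

Lemma Cn_ln m : forall P g, open P -> (forall x, P x -> 0 < g x) -> Cn P m g -> Cn P m (fun x => ln (g x)).
Proof.
destruct m as [|m]; intros P g HP Hp Cg; simpl; auto.
assert (Cg' := Cn_weak _ _ _ Cg).
destruct Cg as [G1 G2]; split.
- intros x Px. apply (ex_derive_comp ln g). exists (/ g x). apply is_derive_ln; auto. auto.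
- apply (Cn_ext m P (fun x => Derive g x * / g x)); auto.
  intros x Px.
  assert (Hl : is_derive ln (g x) (/ g x)) by (apply is_derive_ln; auto).
  rewrite (Derive_comp ln g x); try (exists (/ g x); exact Hl); auto.
  rewrite (is_derive_unique ln (g x) (/ g x) Hl). ring.
  apply Cn_mult; auto. apply Cn_inv; auto. intros x Px; specialize (Hp x Px); lra.
Qed.

Fixpoint Dk (k : nat) (g : R -> R) : R -> R :=
  match k with O => g | S k' => Dk k' (Derive g) end.

Lemma Dk_S k : forall g, Dk (S k) g = Derive (Dk k g).
Proof. induction k as [|k IH]; intros g; [reflexivity|]. simpl. rewrite <- IH. reflexivity. Qed.

Lemma Derive_n_Dk k : forall g x, Derive_n g k x = Dk k g x.
Proof.
induction k as [|k IH]; intros g x; [reflexivity|].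
rewrite Dk_S. simpl. apply Derive_ext. intros; apply IH.
Qed.

Lemma Cn_of m : forall P g, (forall k, (k < m)%nat -> forall x, P x -> ex_derive (Dk k g) x) -> Cn P m g.
Proof.
induction m as [|m IH]; intros P g H; simpl; auto. split.
- intros x Px. apply (H 0%nat); auto. lia.
- apply IH. intros k Hk x Px. apply (H (S k)); auto. lia.
Qed.

Lemma Cn_to m : forall P g, Cn P m g -> forall k, (k < m)%nat -> forall x, P x -> ex_derive (Dk k g) x.
Proof.
induction m as [|m IH]; intros P g C k Hk x Px; [lia|]. destruct C as [C1 C2].
destruct k as [|k]; simpl; auto. apply (IH P (Derive g)); auto. lia.
Qed.

Definition th (g : R -> R) : R -> R := fun x => x * Derive g x.

Lemma Cn_th m P g : open P -> Cn P (S m) g -> Cn P m (th g).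
Proof. intros HP [C1 C2]. unfold th. apply Cn_mult; auto. apply Cn_id; auto. Qed.

Lemma Cn_T j : forall m P g, open P -> Cn P (j + m) g -> Cn P m (iter_deriv th j g).
Proof.
induction j as [|j IH]; intros m P g HP C; simpl; auto.
apply Cn_th; auto. apply IH; auto. replace (j + S m)%nat with (S j + m)%nat by lia. auto.
Qed.

Lemma is_derive_sum (T : nat -> R -> R) (dT c : nat -> R) m x :
  (forall j, (j <= m)%nat -> is_derive (T j) x (dT j)) ->
  is_derive (fun y => sum_f_R0 (fun j => c j * T j y) m) x (sum_f_R0 (fun j => c j * dT j) m).
Proof.
induction m as [|m IH]; intros H; simpl.
- apply is_derive_scal. apply H; lia.
- apply (is_derive_plus (fun y => sum_f_R0 (fun j => c j * T j y) m) (fun y => c (S m) * T (S m) y)).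
  apply IH; intros; apply H; lia. apply is_derive_scal. apply H; lia.
Qed.

Lemma sum_shift F m : sum_f_R0 F (S m) = F 0%nat + sum_f_R0 (fun j => F (S j)) m.
Proof. induction m as [|m IH]; simpl in *; [ring|]. rewrite IH. ring. Qed.

Lemma sum_lin F G a b m : sum_f_R0 (fun j => a * F j + b * G j) m = a * sum_f_R0 F m + b * sum_f_R0 G m.
Proof. induction m as [|m IH]; simpl in *; [ring|]. rewrite IH. ring. Qed.

Lemma comb (c c' t : nat -> R) k m : c (S m) = 0 -> c' 0%nat = - k * c 0%nat ->
  (forall j, (j <= m)%nat -> c' (S j) = c j - k * c (S j)) ->
  sum_f_R0 (fun j => c' j * t j) (S m) =
  sum_f_R0 (fun j => c j * t (S j)) m - k * sum_f_R0 (fun j => c j * t j) m.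
Proof.
intros H0 H1 H2. rewrite sum_shift.
rewrite (sum_eq _ (fun j => 1 * (c j * t (S j)) + (-k) * (c (S j) * t (S j)))).
2:{ intros i Hi. rewrite H2; auto. ring. }
rewrite sum_lin.
assert (E : sum_f_R0 (fun j => c j * t j) (S m) = sum_f_R0 (fun j => c j * t j) m).
{ simpl. rewrite H0. ring. }
rewrite sum_shift in E. rewrite <- E. rewrite H1. ring.
Qed.

Fixpoint stirling1_big m : forall j, (m < j)%nat -> stirling1 m j = 0%nat.
Proof.
destruct m as [|m]; intros j H; destruct j as [|j]; try lia; simpl; auto.
rewrite !stirling1_big; lia.
Qed.

Definition acoef (m j : nat) : R := (-1) ^ (m - j) * INR (stirling1 m j).

Lemma acoef_0 m : acoef (S m) 0 = - INR m * acoef m 0.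
Proof. unfold acoef. destruct m; simpl; ring. Qed.

Lemma acoef_S m j : (j <= m)%nat -> acoef (S m) (S j) = acoef m j - INR m * acoef m (S j).
Proof.
intros H. unfold acoef. simpl (S m - S j)%nat. simpl stirling1.
rewrite plus_INR, mult_INR.
destruct (Nat.eq_dec j m) as [->|Hne].
- rewrite (stirling1_big m (S m)) by lia. simpl. ring.
- replace (m - j)%nat with (S (m - S j)) by lia. simpl. ring.
Qed.

Lemma acoef_big m : acoef m (S m) = 0.
Proof. unfold acoef. rewrite stirling1_big by lia. simpl. ring. Qed.

Lemma star_lemma (P : R -> Prop) (f : R -> R) n :
  open P -> (forall x, P x -> 0 < f x) -> Cn P n (fun y => ln (f y)) ->
  forall k, (k <= n)%nat -> forall x, P x ->
  iter_deriv mstar k f x = exp (Dk k (fun y => ln (f y)) x).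
Proof.
intros HP Hf CL. induction k as [|k IH]; intros Hk x Px.
- simpl. rewrite exp_ln; auto.
- simpl iter_deriv. unfold mstar at 1.
  set (L := fun y => ln (f y)) in *.
  rewrite (Derive_ext_loc _ (fun y : R => exp (Dk k L y))).
  2:{ apply (filter_imp P); [|apply HP; auto]. intros y Py. apply IH; auto; lia. }
  assert (Hd : ex_derive (Dk k L) x) by (apply (Cn_to n P); auto; lia).
  rewrite (Derive_comp exp (Dk k L) x); auto.
  2:{ exists (exp (Dk k L x)). apply is_derive_exp. }
  rewrite (is_derive_unique exp _ _ (is_derive_exp _)).
  rewrite IH by (auto; lia). rewrite Dk_S. f_equal. field. apply Rgt_not_eq, exp_pos.
Qed.

Lemma pi_lemma (P : R -> Prop) (f : R -> R) n :
  open P -> (forall x, P x -> 0 < f x) -> Cn P n (fun y => ln (f y)) ->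
  forall j, (j <= n)%nat -> forall x, P x ->
  iter_deriv mpi j f x = exp (iter_deriv th j (fun y => ln (f y)) x).
Proof.
intros HP Hf CL. induction j as [|j IH]; intros Hj x Px.
- simpl. rewrite exp_ln; auto.
- simpl iter_deriv. unfold mpi at 1. unfold th at 2.
  set (L := fun y => ln (f y)) in *.
  rewrite (Derive_ext_loc _ (fun y : R => exp (iter_deriv th j L y))).
  2:{ apply (filter_imp P); [|apply HP; auto]. intros y Py. apply IH; auto; lia. }
  assert (Hd : ex_derive (iter_deriv th j L) x).
  { assert (C : Cn P (n - j) (iter_deriv th j L)).
    { apply Cn_T; auto. replace (j + (n - j))%nat with n by lia. auto. }
    replace (n - j)%nat with (S (n - S j)) in C by lia. destruct C as [C1 _]. auto. }
  rewrite (Derive_comp exp (iter_deriv th j L) x); auto.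
  2:{ exists (exp (iter_deriv th j L x)). apply is_derive_exp. }
  rewrite (is_derive_unique exp _ _ (is_derive_exp _)).
  rewrite IH by (auto; lia). f_equal.
  transitivity (x * Derive (iter_deriv th j L) x); [|reflexivity].
  field. apply Rgt_not_eq, exp_pos.
Qed.

Lemma ident_lemma (P : R -> Prop) (L : R -> R) n :
  open P -> Cn P n L ->
  forall m, (m <= n)%nat -> forall x, P x ->
  x ^ m * Dk m L x = sum_f_R0 (fun j => acoef m j * iter_deriv th j L x) m.
Proof.
intros HP CL. induction m as [|m IH]; intros Hm x Px.
- unfold acoef; simpl. ring.
- assert (HD : forall j, (j <= m)%nat -> ex_derive (iter_deriv th j L) x).
  { intros j Hj. assert (C : Cn P (n - j) (iter_deriv th j L)).
    { apply Cn_T; auto. replace (j + (n - j))%nat with n by lia. auto. }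
    replace (n - j)%nat with (S (n - S j)) in C by lia. destruct C as [C1 _]. auto. }
  assert (Hdm : ex_derive (Dk m L) x) by (apply (Cn_to n P); auto; lia).
  assert (E : Derive (fun y => y ^ m * Dk m L y) x =
              Derive (fun y => sum_f_R0 (fun j => acoef m j * iter_deriv th j L y) m) x).
  { apply Derive_ext_loc. apply (filter_imp P); [|apply HP; auto]. intros y Py. apply IH; auto; lia. }
  assert (Hp : is_derive (fun y => y ^ m) x (INR m * 1 * x ^ pred m)).
  { apply (is_derive_pow (fun y => y)). apply (is_derive_id x). }
  rewrite Derive_mult in E; [| exists (INR m * 1 * x ^ pred m); auto | auto].
  assert (Ep : Derive (fun y : R => y ^ m) x = INR m * 1 * x ^ pred m)
    by (apply is_derive_unique; exact Hp).
  rewrite Ep in E.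
  assert (Es : Derive (fun y : R => sum_f_R0 (fun j => acoef m j * iter_deriv th j L y) m) x
     = sum_f_R0 (fun j => acoef m j * Derive (iter_deriv th j L) x) m).
  { apply is_derive_unique.
    apply (is_derive_sum (fun j => iter_deriv th j L) (fun j => Derive (iter_deriv th j L) x) (acoef m) m x).
    intros j Hj. apply Derive_correct, HD; auto. }
  rewrite Es in E.
  assert (E2 : x ^ S m * Dk (S m) L x =
     sum_f_R0 (fun j => acoef m j * iter_deriv th (S j) L x) m -
     INR m * sum_f_R0 (fun j => acoef m j * iter_deriv th j L x) m).
  { rewrite <- IH by (auto; lia).
    rewrite (sum_eq _ (fun j => x * (acoef m j * Derive (iter_deriv th j L) x) + 0 * 0)).
    2:{ intros i Hi. simpl. unfold th at 1. ring. }
    rewrite sum_lin. rewrite <- E. rewrite Dk_S.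
    destruct m; simpl; ring. }
  rewrite E2. symmetry. apply (comb (acoef m) (acoef (S m)) (fun j => iter_deriv th j L x)).
  apply acoef_big. apply acoef_0. intros; apply acoef_S; auto.
Qed.

Lemma prodR_ext n F G : (forall j, (1 <= j <= n)%nat -> F j = G j) -> prodR n F = prodR n G.
Proof.
induction n as [|n IH]; intros H; simpl; auto.
rewrite IH by (intros; apply H; lia). rewrite H by lia. auto.
Qed.

Lemma prodR_exp n g : prodR n (fun j => exp (g j)) = exp (sum_f_R0 g n - g 0%nat).
Proof.
induction n as [|n IH]; simpl.
- replace (g 0%nat - g 0%nat) with 0 by ring. rewrite exp_0; auto.
- rewrite IH, <- exp_plus. f_equal. ring.
Qed.

Theorem theorem2 (a b : Rbar) (n : nat) (f : R -> R) :
  Rbar_lt a b ->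
  ~ (Rbar_lt a 0 /\ Rbar_lt 0 b) ->
  (1 <= n)%nat ->
  (forall x : R, Rbar_lt a x -> Rbar_lt x b -> 0 < f x) ->
  (forall k, (k < n)%nat -> forall x : R, Rbar_lt a x -> Rbar_lt x b ->
     ex_derive (Derive_n f k) x) ->
  forall x : R, Rbar_lt a x -> Rbar_lt x b ->
    iter_deriv mstar n f x =
    Rpower
      (prodR n (fun j => Rpower (iter_deriv mpi j f x)
                                ((-1) ^ (n - j) * INR (stirling1 n j))))
      (/ x ^ n).
Proof.
intros Hab H0 Hn Hf Hd x Hax Hxb.
set (P := fun y : R => Rbar_lt a y /\ Rbar_lt y b).
assert (HP : open P) by (apply open_and; [apply open_Rbar_gt | apply open_Rbar_lt]).
assert (Px : P x) by (split; auto).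
assert (Hf' : forall y, P y -> 0 < f y) by (intros y [? ?]; auto).
assert (Cf : Cn P n f).
{ apply Cn_of. intros k Hk y [Hy1 Hy2].
  apply (ex_derive_ext (Derive_n f k)). intros; apply Derive_n_Dk. apply Hd; auto. }
assert (CL : Cn P n (fun y => ln (f y))) by (apply Cn_ln; auto).
assert (Hx0 : x <> 0).
{ intros ->. apply H0; auto. }
set (L := fun y => ln (f y)) in *.
rewrite (star_lemma P f n HP Hf' CL n (le_n n) x Px).
rewrite (prodR_ext n _ (fun j => exp (acoef n j * iter_deriv th j L x))).
2:{ intros j Hj. rewrite (pi_lemma P f n HP Hf' CL j ltac:(lia) x Px).
    unfold Rpower. rewrite ln_exp. reflexivity. }
rewrite prodR_exp.
rewrite <- (ident_lemma P L n HP CL n (le_n n) x Px).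
unfold acoef. destruct n as [|n']; [lia|]. simpl stirling1.
unfold Rpower. rewrite ln_exp. f_equal. simpl INR.
unfold L. field. apply pow_nonzero; auto.
Qed.
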